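(* Let $P,Q$ be finite posets, $R$ an indecomposable commutative unital ring, and $\Phi:I^3(P,R)\to I^3(Q,R)$ an $R$-linear algebra isomorphism. Then for all $x<y$ in $P$ with $l(x,y)=1$ there exist $u<v$ in $Q$ with $l(u,v)=1$ and $\sigma_{xy}\in J^3_2(Q,R)$ such that $\Phi(e_{xxy}+e_{xyy})=e_{uuv}+e_{uvv}+\sigma_{xy}$.
   Context: A commutative ring is indecomposable if its only idempotents are $0$ and $1$. For a finite poset $P$, $P^3_\le=\{(x,y,z)\in P^3: x\le y\le z\}$, and $I^3(P,R)$ is the $R$-module of functions $f:P^3_\le\to R$ with multiplication $(fg)(x_1,x_2,x_3)=\sum f(x_1,y_1,y_2)g(y_1,y_2,x_3)$ over all $x_1\le y_1\le x_2\le y_2\le x_3$. For $x\le y\le z$, $e_{xyz}$ is the function equal to $1$ at $(x,y,z)$ and $0$ elsewhere. For $a\le b$, $l(a,b)$ is the maximum of $|C|-1$ over chains $C$ in the interval $[a,b]$. $J^3_2(Q,R)=\{f\in I^3(Q,R): f(x_1,x_2,x_3)=0 \text{ whenever } l(x_1,x_3)<2\}$. *)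

(* Defs.v *)
From HB Require Import structures.
From mathcomp Require Import all_boot all_order all_algebra.
Set Implicit Arguments. Unset Strict Implicit. Unset Printing Implicit Defensive.
Import Order.TTheory GRing.Theory.
Local Open Scope order_scope.

Section Ternary.
Context {d : Order.disp_t} (P : finPOrderType d) (R : comNzRingType).

Definition trip := {t : P * P * P | (t.1.1 <= t.1.2) && (t.1.2 <= t.2)}.

Local Notation I3 := {ffun trip -> R}.

(* value of f at (x,y,z), with the convention 0 outside P^3_<= (never used
   outside P^3_<= in mul3 below) *)
Definition ev (f : I3) (x y z : P) : R :=
  match insub (x, y, z) with Some t => f t | None => 0%R end.

Definition mul3 (f g : I3) : I3 :=
  [ffun t : trip =>
     let x1 := (val t).1.1 in let x2 := (val t).1.2 in let x3 := (val t).2 in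
     (\sum_(y1 : P) \sum_(y2 : P)
        if [&& (x1 <= y1)%O, (y1 <= x2)%O, (x2 <= y2)%O & (y2 <= x3)%O]
        then ev f x1 y1 y2 * ev g y1 y2 x3 else 0)%R].

Definition scal3 (a : R) (f : I3) : I3 := [ffun t => (a * f t)%R].

Definition e3 (x y z : P) : I3 :=
  [ffun t : trip => if val t == (x, y, z) then 1%R else 0%R].

Definition is_chain_in (a b : P) (C : {set P}) : bool :=
  [forall x in C, (a <= x) && (x <= b)] &&
  [forall x in C, forall y in C, (x <= y) || (y <= x)].

Definition lng (a b : P) : nat :=
  (\max_(C : {set P} | is_chain_in a b C) #|C|).-1.

Definition J32 (f : I3) : Prop :=
  forall t : trip, (lng (val t).1.1 (val t).2 < 2)%N -> f t = 0%R.

End Ternary.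

Notation I3 P R := {ffun trip P -> R}.

Definition Rlinear3 {dP dQ : Order.disp_t} (P : finPOrderType dP)
  (Q : finPOrderType dQ) (R : comNzRingType) (Phi : I3 P R -> I3 Q R) : Prop :=
  (forall f g, Phi (f + g)%R = (Phi f + Phi g)%R) /\
  (forall a f, Phi (scal3 a f) = scal3 a (Phi f)).

Definition indecomposable (R : comNzRingType) : Prop :=
  forall e : R, (e * e = e -> e = 0 \/ e = 1)%R.

(* Main.v *)
Require Import Defs.
From HB Require Import structures.
From mathcomp Require Import all_boot all_order all_algebra.
From Stdlib Require Import Classical.
Set Implicit Arguments. Unset Strict Implicit. Unset Printing Implicit Defensive.
Import Order.TTheory GRing.Theory.
Local Open Scope ring_scope.
Local Open Scope order_scope.

Section Basics.
Context {d : Order.disp_t} (P : finPOrderType d) (R : comNzRingType).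
Implicit Types (f g h : I3 P R) (x y z a b c : P).

Lemma ev_out f x y z : ~~ ((x <= y) && (y <= z)) -> ev f x y z = 0.
Proof. by move=> H; rewrite /ev insubF //; apply/negbTE. Qed.

Lemma ev_in f x y z (H : (x <= y) && (y <= z)) :
  ev f x y z = f (Sub (x, y, z) H).
Proof. by rewrite /ev insubT. Qed.

Lemma ev_val f (t : trip P) : ev f (val t).1.1 (val t).1.2 (val t).2 = f t.
Proof.
case: t => [[[x y] z] H] /=; rewrite (ev_in f H); congr (f _); exact: val_inj.
Qed.

Lemma ev_ext f g :
  (forall x y z, x <= y -> y <= z -> ev f x y z = ev g x y z) -> f = g.
Proof.
move=> H; apply/ffunP => t; rewrite -!ev_val; case: t => [[[x y] z] /andP[H1 H2]] /=.
exact: H.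
Qed.

Lemma evD f g x y z : ev (f + g) x y z = ev f x y z + ev g x y z.
Proof.
case: (boolP ((x <= y) && (y <= z))) => H; last by rewrite !ev_out // addr0.
by rewrite !(ev_in _ H) ffunE.
Qed.

Lemma evN f x y z : ev (- f) x y z = - ev f x y z.
Proof.
case: (boolP ((x <= y) && (y <= z))) => H; last by rewrite !ev_out // oppr0.
by rewrite !(ev_in _ H) ffunE.
Qed.

Lemma evB f g x y z : ev (f - g) x y z = ev f x y z - ev g x y z.
Proof. by rewrite evD evN. Qed.

Lemma ev0 x y z : ev (0 : I3 P R) x y z = 0.
Proof.
case: (boolP ((x <= y) && (y <= z))) => H; last by rewrite !ev_out.
by rewrite !(ev_in _ H) ffunE.
Qed.

Lemma evZ (r : R) f x y z : ev (scal3 r f) x y z = r * ev f x y z.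
Proof.
case: (boolP ((x <= y) && (y <= z))) => H; last by rewrite !ev_out // mulr0.
by rewrite !(ev_in _ H) ffunE.
Qed.

Lemma ev_e3 a b c x y z : ev (e3 R a b c) x y z =
  if [&& x <= y, y <= z, x == a, y == b & z == c] then 1 else 0.
Proof.
case: (boolP ((x <= y) && (y <= z))) => H; last first.
  rewrite ev_out //; case: (x <= y) H => //=; by case: (y <= z).
rewrite (ev_in _ H) ffunE /=; case/andP: H => -> -> /=.
by rewrite !xpair_eqE andbA.
Qed.

Lemma ev_mul f g x y z : x <= y -> y <= z ->
  ev (mul3 f g) x y z =
  \sum_(y1 : P) \sum_(y2 : P)
     if [&& (x <= y1)%O, (y1 <= y)%O, (y <= y2)%O & (y2 <= z)%O]
     then ev f x y1 y2 * ev g y1 y2 z else 0.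
Proof.
move=> H1 H2; have H : (x <= y) && (y <= z) by rewrite H1 H2.
by rewrite (ev_in _ H) ffunE.
Qed.


Lemma sum_single (F : P -> R) a : (forall i, i != a -> F i = 0) ->
  \sum_(i : P) F i = F a.
Proof.
move=> H; rewrite (bigD1 a) //= big1 ?addr0 // => i /H //.
Qed.

Lemma ev_mul_left a b c g z1 z2 z3 : a <= b -> b <= c -> z1 <= z2 -> z2 <= z3 ->
  ev (mul3 (e3 R a b c) g) z1 z2 z3 =
  if [&& z1 == a, b <= z2 & z2 <= c] then ev g b c z3 else 0.
Proof.
move=> ab bc H1 H2; rewrite ev_mul //.
rewrite (sum_single (a := b)); last first.
  move=> i ib; apply: big1 => j _; rewrite ev_e3 (negbTE ib) /=.
  by case: ifP => // _; rewrite !andbF mul0r.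
rewrite (sum_single (a := c)); last first.
  move=> j jc; rewrite ev_e3 (negbTE jc) /=.
  by case: ifP => // _; rewrite !andbF mul0r.
rewrite ev_e3 eqxx bc /=.
case: (eqVneq z1 a) => [->|] /=; last first.
  by move=> _; case: ifP => // _; rewrite andbF mul0r.
rewrite ab /=; case: (b <= z2) => //=; case: (z2 <= c) => //=.
case: (boolP (c <= z3)) => cz /=; first by rewrite eqxx mul1r.
by rewrite ev_out // bc.
Qed.

Lemma ev_mul_right a b c g z1 z2 z3 : a <= b -> b <= c -> z1 <= z2 -> z2 <= z3 ->
  ev (mul3 g (e3 R a b c)) z1 z2 z3 =
  if [&& z3 == c, a <= z2 & z2 <= b] then ev g z1 a b else 0.
Proof.
move=> ab bc H1 H2; rewrite ev_mul //.
rewrite (sum_single (a := a)); last first.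
  move=> i ia; apply: big1 => j _; rewrite ev_e3 (negbTE ia) /=.
  by case: ifP => // _; rewrite !andbF mulr0.
rewrite (sum_single (a := b)); last first.
  move=> j jb; rewrite ev_e3 (negbTE jb) /=.
  by case: ifP => // _; rewrite !andbF ?andFb mulr0.
rewrite ev_e3 ab !eqxx /=.
case: (eqVneq z3 c) => [->|nz] /=; last first.
  by rewrite andbF; case: ifP => // _; rewrite mulr0.
rewrite bc /=; case: (a <= z2) => //=; case: (z2 <= b) => //=; rewrite ?andbF //.
case: (boolP (z1 <= a)) => cz /=; first by rewrite mulr1.
by rewrite ev_out // negb_and cz.
Qed.


Lemma le_eq_anti x y : x <= y -> y <= x -> x = y.
Proof. by move=> H1 H2; apply/le_anti; rewrite H1 H2. Qed.

Lemma ev_mul_sss f g s : ev (mul3 f g) s s s = ev f s s s * ev g s s s.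
Proof.
rewrite ev_mul //.
rewrite (sum_single (a := s)); last first.
  move=> i ia; apply: big1 => j _; case: ifP => // /and4P[H1 H2 _ _].
  by move: ia; rewrite (le_eq_anti H2 H1) eqxx.
rewrite (sum_single (a := s)) ?lexx //.
move=> j ja; case: ifP => // /and4P[_ _ H1 H2].
by move: ja; rewrite (le_eq_anti H2 H1) eqxx.
Qed.

Lemma ev_mul_sst f g s t : s <= t -> ev (mul3 f g) s s t =
  \sum_(m : P) if ((s <= m) && (m <= t))%O then ev f s s m * ev g s m t else 0.
Proof.
move=> st; rewrite ev_mul //.
rewrite (sum_single (a := s)); last first.
  move=> i ia; apply: big1 => j _; case: ifP => // /and4P[H1 H2 _ _].
  by move: ia; rewrite (le_eq_anti H2 H1) eqxx.
by apply: eq_bigr => m _; rewrite lexx.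
Qed.

Lemma ev_mul_stt f g s t : s <= t -> ev (mul3 f g) s t t =
  \sum_(m : P) if ((s <= m) && (m <= t))%O then ev f s m t * ev g m t t else 0.
Proof.
move=> st; rewrite ev_mul //.
apply: eq_bigr => m _.
rewrite (sum_single (a := t)); last first.
  move=> j ja; case: ifP => // /and4P[_ _ H1 H2].
  by move: ja; rewrite (le_eq_anti H2 H1) eqxx.
by rewrite lexx !andbT.
Qed.

Definition small (s t : P) := forall m, s <= m -> m <= t -> m = s \/ m = t.

Lemma sum_cover (F : P -> R) s t : s < t -> small s t ->
  \sum_(m : P) (if ((s <= m) && (m <= t))%O then F m else 0) = F s + F t.
Proof.
move=> st sm; have st' := ltW st; have nst : s != t by rewrite lt_neqAle in st; case/andP: st.
rewrite (bigD1 s) //= (bigD1 t) //= ?lexx ?st' /=; last by rewrite eq_sym.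
rewrite big1 ?addr0 //.
move=> i /andP[it iss]; case: ifP => // /andP[H1 H2].
by case: (sm i H1 H2) => E; [move: it | move: iss]; rewrite E eqxx.
Qed.


Lemma ev_mulL a b c g z1 z2 z3 : a <= b -> b <= c ->
  ev (mul3 (e3 R a b c) g) z1 z2 z3 =
  if [&& z1 <= z2, z2 <= z3, z1 == a, b <= z2 & z2 <= c] then ev g b c z3 else 0.
Proof.
move=> ab bc; case: (boolP ((z1 <= z2) && (z2 <= z3))) => [/andP[H1 H2]|H].
  by rewrite ev_mul_left // H1 H2.
rewrite ev_out //; move: H; case: (z1 <= z2) => //=; by case: (z2 <= z3).
Qed.

Lemma ev_mulR a b c g z1 z2 z3 : a <= b -> b <= c ->
  ev (mul3 g (e3 R a b c)) z1 z2 z3 =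
  if [&& z1 <= z2, z2 <= z3, z3 == c, a <= z2 & z2 <= b] then ev g z1 a b else 0.
Proof.
move=> ab bc; case: (boolP ((z1 <= z2) && (z2 <= z3))) => [/andP[H1 H2]|H].
  by rewrite ev_mul_right // H1 H2.
rewrite ev_out //; move: H; case: (z1 <= z2) => //=; by case: (z2 <= z3).
Qed.

Definition assoc3 f g h := mul3 (mul3 f g) h - mul3 f (mul3 g h).
Definition J1 f := forall x, ev f x x x = 0.

Lemma e3_assoc1 a b r : a <= b -> b < r ->
  e3 R a b r = assoc3 (e3 R a b r) (e3 R b r r) (e3 R b r r)
             - assoc3 (e3 R a b b) (e3 R b b r) (e3 R b r r).
Proof.
move=> ab br; have br' := ltW br; have ar := le_trans ab br'.
apply: ev_ext => z1 z2 z3 H1 H2.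
rewrite /assoc3 !evB !ev_mulR ?lexx // !ev_mulL ?lexx //.
rewrite !ev_e3 !eqxx !lexx ?ab ?br' ?ar ?H1 ?H2 /= !andbT.
have rb : (r == b) = false by apply/negbTE; rewrite eq_sym; rewrite lt_neqAle in br; case/andP: br.
rewrite rb /= ?andbF /= (eq_le z2 b) !if_same.
case: (eqVneq z1 a) => [->|n1]; case: (eqVneq z3 r) => [->|n3];
  rewrite /= ?ab ?lexx ?andbF ?andbT ?br' ?subrr ?sub0r ?subr0 //=.
- by rewrite andbC opprB addrC subrK.
all: rewrite ?if_same ?oppr0 ?subrr //.
all: try by rewrite (negbTE n1) /= ?andbF ?if_same ?subrr.
Qed.



Lemma e3_assoc2 a r : a < r ->
  e3 R a r r = assoc3 (e3 R a a r) (e3 R a r r) (e3 R r r r)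
             - assoc3 (e3 R a a r) (e3 R a a r) (e3 R a r r).
Proof.
move=> ar; have ar' := ltW ar.
have ra : (r == a) = false by apply/negbTE; rewrite eq_sym; rewrite lt_neqAle in ar; case/andP: ar.
apply: ev_ext => z1 z2 z3 H1 H2.
rewrite /assoc3 !evB !ev_mulR ?lexx // !ev_mulL ?lexx //.
rewrite !ev_e3 !eqxx !lexx ?ar' ?H1 ?H2 /= !andbT ?ra /= ?andbF /= ?if_same.
rewrite (eq_le z2 r).
case: (eqVneq z1 a) => [->|n1]; case: (eqVneq z3 r) => [->|n3];
  rewrite /= ?lexx ?andbF ?andbT ?ar' ?subrr ?sub0r ?subr0 ?if_same ?oppr0 //=.
- by rewrite eq_sym ra if_same andbC sub0r opprK subrK.
- by rewrite addr0.
Qed.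


Lemma J1_assoc f g h : J1 (assoc3 f g h).
Proof. by move=> x; rewrite evB !ev_mul_sss mulrA subrr. Qed.

Lemma J1_0 : J1 0.
Proof. by move=> x; rewrite ev0. Qed.
Lemma J1_D f g : J1 f -> J1 g -> J1 (f + g).
Proof. by move=> Hf Hg x; rewrite evD Hf Hg addr0. Qed.
Lemma J1_B f g : J1 f -> J1 g -> J1 (f - g).
Proof. by move=> Hf Hg x; rewrite evB Hf Hg subr0. Qed.
Lemma J1_Z r f : J1 f -> J1 (scal3 r f).
Proof. by move=> Hf x; rewrite evZ Hf mulr0. Qed.

Definition et (t : trip P) : I3 P R := e3 R (val t).1.1 (val t).1.2 (val t).2.

Lemma decomp f : f = \sum_(t : trip P) scal3 (f t) (et t).
Proof.
apply/ffunP => t0; rewrite sum_ffunE (bigD1 t0) //= big1 ?addr0.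
  by rewrite !ffunE /= -!surjective_pairing eqxx mulr1.
move=> t tt0; rewrite !ffunE /=.
case: eqP => [E|]; last by rewrite mulr0.
by case/eqP: tt0; apply: val_inj; rewrite /= E -!surjective_pairing.
Qed.


Lemma lng_lt2 a c : small a c -> (lng a c < 2)%N.
Proof.
move=> sm; rewrite /lng.
suff H : (\max_(C : {set P} | is_chain_in a c C) #|C| <= 2)%N.
  by case: (\max_(C : {set P} | is_chain_in a c C) #|C|) H => // [[|[|]]].
apply/bigmax_leqP => C /andP[/forallP HC _].
apply: (leq_trans (subset_leq_card (B := [set a; c]) _)).
  apply/subsetP => m mC; move: (HC m); rewrite mC /= => /andP[H1 H2].
  by case: (sm m H1 H2) => ->; rewrite !inE eqxx ?orbT.
by rewrite cards2; case: (a != c).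
Qed.

Lemma lng_small a c : (lng a c < 2)%N -> a <= c -> small a c.
Proof.
move=> H ac m am mc.
case: (eqVneq m a) => [|ma]; first by left.
case: (eqVneq m c) => [|mc']; first by right.
exfalso; move: H; apply/negP; rewrite -leqNgt /lng.
have Hch : is_chain_in a c [set a; m; c].
  apply/andP; split.
    by apply/forallP => x; apply/implyP; rewrite !inE -?orbA => /or3P[] /eqP->; rewrite ?lexx ?ac ?am ?mc.
  apply/forallP => x; apply/implyP; rewrite !inE -?orbA => Hx.
  apply/forallP => y; apply/implyP; rewrite !inE -?orbA => Hy.
  by case/or3P: Hx => /eqP->; case/or3P: Hy => /eqP->; rewrite ?lexx ?ac ?am ?mc ?orbT.
have := leq_bigmax_cond (F := fun C : {set P} => #|C|) _ Hch.
have ac' : (c == a) = false.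
  apply/negbTE; apply: contraNneq ma => E.
  by apply/eqP; apply: le_eq_anti => //; rewrite -E.
rewrite setUC (cardsU1 c) (cardsU1 a) cards1 !inE ac' eq_sym (negbTE mc') eq_sym (negbTE ma) /=.
by case: (\max_(C : {set P} | is_chain_in a c C) #|C|) => // [[|[|]]].
Qed.

Lemma lng_1 a c : a < c -> small a c -> lng a c = 1%N.
Proof.
move=> ac sm; have acl := ltW ac; have := lng_lt2 sm; rewrite /lng.
have Hch : is_chain_in a c [set a; c].
  apply/andP; split.
    by apply/forallP => x; apply/implyP; rewrite !inE => /orP[] /eqP->; rewrite ?lexx ?acl.
  apply/forallP => x; apply/implyP; rewrite !inE -?orbA => Hx.
  apply/forallP => y; apply/implyP; rewrite !inE -?orbA => Hy.
  by case/orP: Hx => /eqP->; case/orP: Hy => /eqP->; rewrite ?lexx ?acl ?orbT.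
have := leq_bigmax_cond (F := fun C : {set P} => #|C|) _ Hch.
rewrite cards2; move: ac; rewrite lt_neqAle => /andP[-> _] /=.
by case: (\max_(C : {set P} | is_chain_in a c C) #|C|) => // [[|[|]]].
Qed.


Lemma ex_min a c m0 : a < m0 -> m0 < c -> exists m, [/\ a < m, m < c & small a m].
Proof.
move=> am0 m0c.
have P0 : (a < m0) && (m0 < c) by rewrite am0 m0c.
case: (@arg_minnP _ m0 (fun m => (a < m) && (m < c)) (fun m => #|[set z | (a < z) && (z < m)]|) P0) => m /andP[am mc] Hmin.
exists m; split => // z az zm.
case: (eqVneq z a) => [|za]; first by left.
case: (eqVneq z m) => [|zm']; first by right.
have az' : a < z by rewrite lt_neqAle eq_sym za az.
have zm'' : z < m by rewrite lt_neqAle zm' zm.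
have := Hmin z; rewrite az' (lt_trans zm'' mc) => /(_ isT).
suff : (#|[set z0 | ((a < z0) && (z0 < z))%O]| < #|[set z0 | ((a < z0) && (z0 < m))%O]|)%N.
  by move=> H1 H2; move: (leq_trans H1 H2); rewrite ltnn.
apply: proper_card; apply/properP; split.
  by apply/subsetP => w; rewrite !inE => /andP[-> wz] /=; apply: lt_trans wz zm''.
by exists z; rewrite !inE ?az' ?zm'' ?ltxx ?andbF.
Qed.

Lemma ex_max a c m0 : a < m0 -> m0 < c -> exists m, [/\ a < m, m < c & small m c].
Proof.
move=> am0 m0c.
have P0 : (a < m0) && (m0 < c) by rewrite am0 m0c.
case: (@arg_minnP _ m0 (fun m => (a < m) && (m < c)) (fun m => #|[set z | (m < z) && (z < c)]|) P0) => m /andP[am mc] Hmin.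
exists m; split => // z mz zc.
case: (eqVneq z m) => [|zm]; first by left.
case: (eqVneq z c) => [|zc']; first by right.
have mz' : m < z by rewrite lt_neqAle eq_sym zm mz.
have zc'' : z < c by rewrite lt_neqAle zc' zc.
have := Hmin z; rewrite zc'' (lt_trans am mz') => /(_ isT).
suff : (#|[set z0 | ((z < z0) && (z0 < c))%O]| < #|[set z0 | ((m < z0) && (z0 < c))%O]|)%N.
  by move=> H1 H2; move: (leq_trans H1 H2); rewrite ltnn.
apply: proper_card; apply/properP; split.
  by apply/subsetP => w; rewrite !inE => /andP[zw ->]; rewrite andbT; apply: lt_trans zw.
by exists z; rewrite !inE ?mz' ?zc'' ?ltxx.
Qed.


Lemma neq_lt x y : x < y -> (x == y) = false.
Proof. by rewrite lt_neqAle => /andP[/negbTE]. Qed.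

Lemma gen1 a b c : a < b -> b < c ->
  e3 R a b c = mul3 (e3 R a b b) (e3 R b b c).
Proof.
move=> ab bc; have ab' := ltW ab; have bc' := ltW bc.
apply: ev_ext => z1 z2 z3 H1 H2.
rewrite ev_mulL ?lexx // !ev_e3 !eqxx !lexx ?bc' ?H1 ?H2 /= (eq_le z2 b).
case: (eqVneq z3 c) => [->|n3]; rewrite ?bc' /= ?andbF ?andbT ?if_same //.
by case: (z1 == a) => //=; rewrite andbC.
Qed.

Lemma gen2 a m c : a < m -> m < c -> small a m ->
  e3 R a a c = mul3 (e3 R a a m) (e3 R a m c) - mul3 (e3 R a m m) (e3 R m m c).
Proof.
move=> am mc sm; have am' := ltW am; have mc' := ltW mc.
apply: ev_ext => z1 z2 z3 H1 H2.
rewrite evB !ev_mulL ?lexx // !ev_e3 !eqxx !lexx ?am' ?mc' ?H1 ?H2 /=.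
case: (eqVneq z1 a) => [_|_] /=; last by rewrite subrr.
case: (eqVneq z3 c) => [E|_] /=; last by rewrite !andbF /= !if_same subrr.
subst z3; rewrite !andbT ?mc' (eq_le z2 a) /=.
case: (boolP ((a <= z2) && (z2 <= m))) => [/andP[H3 H4]|H3] /=.
  case: (sm z2 H3 H4) => ->; rewrite ?eqxx ?lexx ?am' ?(lt_geF am) //= ?subr0 ?subrr //.
have -> : (z2 <= a) && (a <= z2) = false.
  apply/negbTE; apply: contra H3 => /andP[H5 H6]; rewrite H6 /=; exact: le_trans H5 am'.
have -> : (m <= z2) && (z2 <= m) = false.
  apply/negbTE; apply: contra H3 => /andP[H5 H6]; rewrite H6 andbT; exact: le_trans am' H5.
by rewrite subr0.
Qed.


Lemma gen3 a m c : a < m -> m < c -> small m c ->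
  e3 R a c c = mul3 (e3 R a m c) (e3 R m c c) - mul3 (e3 R a m m) (e3 R m m c).
Proof.
move=> am mc sm; have am' := ltW am; have mc' := ltW mc.
apply: ev_ext => z1 z2 z3 H1 H2.
rewrite evB !ev_mulL ?lexx // !ev_e3 !eqxx !lexx ?am' ?mc' ?H1 ?H2 /=.
case: (eqVneq z1 a) => [_|_] /=; last by rewrite subrr.
case: (eqVneq z3 c) => [E|_] /=; last by rewrite !andbF /= !if_same subrr.
subst z3; rewrite !andbT ?mc' (eq_le z2 c) /=.
case: (boolP ((m <= z2) && (z2 <= c))) => [/andP[H3 H4]|H3] /=.
  case: (sm z2 H3 H4) => ->; rewrite ?eqxx ?lexx ?mc' ?(lt_geF mc) //= ?subr0 ?subrr //.
have -> : (z2 <= c) && (c <= z2) = false.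
  apply/negbTE; apply: contra H3 => /andP[H5 H6]; rewrite H5 andbT; exact: le_trans mc' H6.
have -> : (m <= z2) && (z2 <= m) = false.
  apply/negbTE; apply: contra H3 => /andP[H5 H6]; rewrite H5 /=; exact: le_trans H6 mc'.
by rewrite subr0.
Qed.


Lemma mul3Dl f f' g : mul3 (f + f') g = mul3 f g + mul3 f' g.
Proof.
apply/ffunP => t; rewrite !ffunE -big_split; apply: eq_bigr => i _.
rewrite -big_split; apply: eq_bigr => j _ /=; case: ifP => _ /=; last by rewrite addr0.
by rewrite evD mulrDl.
Qed.

Lemma mul3Dr f g g' : mul3 f (g + g') = mul3 f g + mul3 f g'.
Proof.
apply/ffunP => t; rewrite !ffunE -big_split; apply: eq_bigr => i _.
rewrite -big_split; apply: eq_bigr => j _ /=; case: ifP => _ /=; last by rewrite addr0.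
by rewrite evD mulrDr.
Qed.

Lemma J32E f : J32 f <-> forall x y z, x <= y -> y <= z -> (lng x z < 2)%N -> ev f x y z = 0.
Proof.
split.
  move=> H x y z H1 H2 Hl; rewrite (ev_in f (introT andP (conj H1 H2))); exact: H.
move=> H t Ht; rewrite -ev_val; case: t Ht => [[[x y] z] /andP[H1 H2]] /= Hl.
exact: H.
Qed.

Lemma J32_mul f g : J32 f -> J32 (mul3 f g).
Proof.
move/J32E => Hf; apply/J32E => x y z H1 H2 Hl.
rewrite ev_mul //; apply: big1 => y1 _; apply: big1 => y2 _.
case: ifP => // /and4P[K1 K2 K3 K4].
have xz := le_trans H1 H2; have sm := lng_small Hl xz.
have xy2 : x <= y2 := le_trans (le_trans K1 K2) K3.
rewrite Hf ?mul0r //; first exact: le_trans K2 K3.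
apply: lng_lt2 => m xm my2; case: (sm m xm (le_trans my2 K4)) => [->|E]; first by left.
by right; apply: le_eq_anti => //; rewrite E.
Qed.


Definition Kp f := forall s t, s < t -> small s t -> ev f s s t = ev f s t t.

Lemma Kp_mul g h : J1 g -> J1 h -> Kp (mul3 g h).
Proof.
move=> Hg Hh s t st sm; have st' := ltW st.
rewrite ev_mul_sst // ev_mul_stt // !sum_cover // Hg Hh mul0r mulr0 add0r addr0.
by [].
Qed.

Lemma Kp_D f g : Kp f -> Kp g -> Kp (f + g).
Proof. by move=> Hf Hg s t st sm; rewrite !evD Hf ?Hg. Qed.
Lemma Kp_B f g : Kp f -> Kp g -> Kp (f - g).
Proof. by move=> Hf Hg s t st sm; rewrite !evB Hf ?Hg. Qed.
Lemma Kp_Z r f : Kp f -> Kp (scal3 r f).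
Proof. by move=> Hf s t st sm; rewrite !evZ Hf. Qed.
Lemma Kp_0 : Kp 0.
Proof. by move=> s t st sm; rewrite !ev0. Qed.

Lemma in_cover x y z : x <= y -> small x y -> ((x <= z) && (z <= y)) = (z == x) || (z == y).
Proof.
move=> xy sm; apply/idP/idP.
  by case/andP => H1 H2; case: (sm z H1 H2) => ->; rewrite eqxx ?orbT.
by case/orP => /eqP->; rewrite ?lexx ?xy.
Qed.


Definition uu x y : I3 P R := e3 R x x y + e3 R x y y.

Lemma J1_uu x y : x < y -> J1 (uu x y).
Proof.
move=> xy z; rewrite evD !ev_e3.
case: (eqVneq z x) => [->|_] /=; last by rewrite !andbF addr0.
by rewrite (neq_lt xy) !andbF addr0.
Qed.

Lemma uu_e3y x y : x < y -> mul3 (uu x y) (e3 R y y y) = e3 R x y y.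
Proof.
move=> xy; have xy' := ltW xy; have yx := neq_lt xy; rewrite eq_sym in yx.
apply: ev_ext => z1 z2 z3 H1 H2.
rewrite mul3Dl evD !ev_mulL ?lexx // !ev_e3 H1 H2 /= eqxx (neq_lt xy) /= !andbF !if_same add0r lexx /=.
case: (z1 == x) => //=; rewrite (eq_le z2 y) andbC.
case: (eqVneq z3 y) => [E|_]; last by rewrite !andbF if_same.
by rewrite E lexx !andbT.
Qed.


Lemma uu_idem x y : x < y -> small x y -> mul3 (uu x y) (uu x y) = uu x y.
Proof.
move=> xy sm; have xy' := ltW xy; have nxy := neq_lt xy; have nyx := nxy; rewrite eq_sym in nyx.
apply: ev_ext => z1 z2 z3 H1 H2.
rewrite /uu mul3Dl !mul3Dr !evD !ev_mulL ?lexx // !ev_e3 H1 H2 /= !eqxx ?nxy ?nyx /= ?andbF ?if_same ?add0r ?addr0 ?lexx /=.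
case: (z1 == x) => /=; last by rewrite addr0.
case: (eqVneq z3 y) => [E|_]; last by rewrite !andbF if_same addr0.
rewrite E xy' lexx in_cover //=.
rewrite !andbT; case: (eqVneq z2 x) => [E2|_] /=; first by rewrite E2 nxy addr0.
by rewrite add0r.
Qed.


Lemma uu_corner x y g : x < y -> small x y ->
  mul3 (mul3 (uu x y) g) (uu x y) = scal3 (ev g x y y) (uu x y).
Proof.
move=> xy sm; have xy' := ltW xy; have nxy := neq_lt xy; have nyx := nxy; rewrite eq_sym in nyx.
apply: ev_ext => z1 z2 z3 H1 H2.
rewrite /uu mul3Dr mul3Dl evZ !evD !ev_mulR ?lexx // !evD.
rewrite !ev_mulL ?lexx // !ev_e3 H1 H2 /=.
have -> : ev g x y x = 0 by rewrite ev_out // (lt_geF xy) andbF.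
rewrite (lt_geF xy) xy' /= ?andbF !if_same add0r addr0.
case: (eqVneq z1 x) => [E1|_] /=; last by rewrite ?andbF !if_same !add0r mulr0.
rewrite E1 lexx /= (in_cover z2 xy' sm).
case: (eqVneq z3 y) => [E3|_] /=; last by rewrite !andbF addr0 mulr0.
rewrite !andbT ?add0r.
rewrite if_same add0r; case: (eqVneq z2 x) => [E2|_] /=; first by rewrite E2 nxy addr0 mulr1.
by case: (z2 == y); rewrite /= ?add0r ?mulr1 ?mulr0.
Qed.


Lemma J1_e3 a b c : a != c -> J1 (e3 R a b c).
Proof.
move=> ac z; rewrite ev_e3; case: (eqVneq z a) => [E|]; last by rewrite !andbF.
by subst z; rewrite (negbTE ac) !andbF.
Qed.

Lemma J1_Z0 f : J1 (scal3 0 f).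
Proof. by move=> z; rewrite evZ mul0r. Qed.

Lemma Kp_Z0 f : Kp (scal3 0 f).
Proof. by move=> s t _ _; rewrite !evZ !mul0r. Qed.

Lemma not_small a c : a <= c -> ~ small a c -> exists m, a < m /\ m < c.
Proof.
move=> ac ns; apply: NNPP => H; apply: ns => m am mc.
case: (eqVneq m a) => [|ma]; first by left.
case: (eqVneq m c) => [|mc']; first by right.
exfalso; apply: H; exists m; split; rewrite lt_neqAle ?ma ?mc' ?am ?mc // eq_sym ma.
by [].
Qed.

End Basics.

Section Transfer.
Context {d1 d2 : Order.disp_t} (P : finPOrderType d1) (Q : finPOrderType d2)
  (R : comNzRingType) (Th : I3 P R -> I3 Q R)
  (ThD : forall f g, Th (f + g) = Th f + Th g)
  (ThZ : forall a f, Th (scal3 a f) = scal3 a (Th f))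
  (ThM : forall f g, Th (mul3 f g) = mul3 (Th f) (Th g)).

Lemma Th0 : Th 0 = 0.
Proof. by apply: (addrI (Th 0)); rewrite -ThD !addr0. Qed.

Lemma ThN f : Th (- f) = - Th f.
Proof. by apply: (addrI (Th f)); rewrite -ThD !subrr Th0. Qed.

Lemma ThB f g : Th (f - g) = Th f - Th g.
Proof. by rewrite ThD ThN. Qed.

Lemma Th_sum (F : trip P -> I3 P R) : Th (\sum_(t : trip P) F t) = \sum_(t : trip P) Th (F t).
Proof. exact: (big_morph Th ThD Th0). Qed.

Lemma Th_assoc f g h : Th (assoc3 f g h) = assoc3 (Th f) (Th g) (Th h).
Proof. by rewrite /assoc3 ThB !ThM. Qed.

Lemma J1_transfer f : J1 f -> J1 (Th f).
Proof.
move=> Hf; rewrite (decomp f) Th_sum.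
apply: (big_ind (fun k => J1 k)); [exact: J1_0 | exact: J1_D |].
move=> [[[a b] c] Ht] _; rewrite ThZ /et /=.
have /andP[ab bc] := Ht.
case: (eqVneq a c) => [E|ac].
  subst c; have E : b = a by apply: le_eq_anti.
  subst b; rewrite -(ev_in f) Hf; exact: J1_Z0.
apply: J1_Z.
case: (eqVneq b c) => [E|bc'].
  subst b; have ac' : a < c by rewrite lt_neqAle ac ab.
  rewrite (e3_assoc2 R ac') ThB !Th_assoc; apply: J1_B; exact: J1_assoc.
have bc'' : b < c by rewrite lt_neqAle bc' bc.
rewrite (e3_assoc1 R ab bc'') ThB !Th_assoc; apply: J1_B; exact: J1_assoc.
Qed.


Lemma Kp_transfer f : J32 f -> Kp (Th f).
Proof.
move=> Hf; have Hf' := (iffLR (J32E f) Hf).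
rewrite (decomp f) Th_sum.
apply: (big_ind (fun k => Kp k)); [exact: Kp_0 | exact: Kp_D |].
move=> [[[a b] c] Ht] _; rewrite ThZ /et /=.
have /andP[ab bc] := Ht.
case: (boolP (lng a c < 2)%N) => Hl.
  rewrite -(ev_in f) Hf' //; exact: Kp_Z0.
apply: Kp_Z.
have ac := le_trans ab bc.
have [m0 [am0 m0c]] : exists m, a < m /\ m < c.
  by apply: not_small => // sm; move: Hl; rewrite (lng_lt2 sm).
have J1e : forall x y z : P, x < z -> J1 (Th (e3 R x y z)).
  move=> x y z xz; apply: J1_transfer; apply: J1_e3.
  by rewrite lt_neqAle in xz; case/andP: xz.
case: (eqVneq b a) => [E|ba].
  subst b; have [m [am mc sm]] := ex_min am0 m0c.
  rewrite (gen2 R am mc sm) ThB !ThM.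
  by apply: Kp_B; apply: Kp_mul; apply: J1e => //; apply: lt_trans am mc.
case: (eqVneq b c) => [E|bc'].
  subst b; have [m [am mc sm]] := ex_max am0 m0c.
  rewrite (gen3 R am mc sm) ThB !ThM.
  by apply: Kp_B; apply: Kp_mul; apply: J1e => //; apply: lt_trans am mc.
have ab' : a < b by rewrite lt_neqAle eq_sym ba ab.
have bc'' : b < c by rewrite lt_neqAle bc' bc.
rewrite (gen1 R ab' bc'') ThM; apply: Kp_mul; exact: J1e.
Qed.

End Transfer.

Unset Implicit Arguments.

Theorem corollary3p3 (dP dQ : Order.disp_t)
  (P : finPOrderType dP) (Q : finPOrderType dQ) (R : comNzRingType)
  (Hind : indecomposable R)
  (Phi : I3 P R -> I3 Q R)
  (Phi_lin : Rlinear3 Phi)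
  (Phi_bij : bijective Phi)
  (Phi_mul : forall f g : I3 P R, Phi (mul3 f g) = mul3 (Phi f) (Phi g)) :
  forall x y : P, x < y -> lng x y = 1%N ->
  exists (u v : Q), [/\ u < v, lng u v = 1%N &
    exists sigma : I3 Q R, J32 sigma /\
      Phi (e3 R x x y + e3 R x y y) = e3 R u u v + e3 R u v v + sigma].
Proof.
move=> x y xy lxy.
have sxy : small x y by apply: lng_small; rewrite ?lxy // ltW.
case: Phi_lin => PhiD PhiZ.
case: Phi_bij => Psi K1 K2.
have PsiD : forall f g, Psi (f + g) = Psi f + Psi g.
  by move=> f g; apply: (can_inj K1); rewrite PhiD !K2.
have PsiZ : forall a f, Psi (scal3 a f) = scal3 a (Psi f).
  by move=> a f; apply: (can_inj K1); rewrite PhiZ !K2.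
have PsiM : forall f g, Psi (mul3 f g) = mul3 (Psi f) (Psi g).
  by move=> f g; apply: (can_inj K1); rewrite Phi_mul !K2.
have -> : e3 R x x y + e3 R x y y = uu R x y by [].
set f := Phi (uu R x y).
have fidem : mul3 f f = f by rewrite /f -Phi_mul uu_idem.
have fJ1 : J1 f := J1_transfer PhiD PhiZ Phi_mul (J1_uu R xy).
have nJ2 : ~ J32 f.
  move=> Hf.
  have Hb : J32 (Phi (e3 R x y y)) by rewrite -(uu_e3y R xy) Phi_mul; exact: J32_mul.
  have := Kp_transfer PsiD PsiZ PsiM Hb; rewrite K1 => /(_ x y xy sxy).
  rewrite !ev_e3 !lexx ltW //= (neq_lt xy) !eqxx /= ?andbF.
  by move/eqP; rewrite eq_sym oner_eq0.
have cov : forall a c, a < c -> small a c ->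
    ev f a a c = ev f a c c /\ ev f a a c * ev f a a c = ev f a a c.
  move=> a c ac sm; have ac' := ltW ac.
  have E1 : ev f a a c = ev f a a c * ev f a c c.
    by rewrite -{1}fidem ev_mul_sst // sum_cover // fJ1 mul0r add0r.
  have E2 : ev f a c c = ev f a a c * ev f a c c.
    by rewrite -{1}fidem ev_mul_stt // sum_cover // fJ1 mulr0 addr0.
  have E3 : ev f a a c = ev f a c c by rewrite E1 -E2.
  by split => //; rewrite {2}E3 -E1.
have [s [m [t [H1 [H2 [Hl Hne]]]]]] : exists s m t, [/\ s <= m, m <= t,
    (lng s t < 2)%N & ev f s m t <> 0].
  apply: NNPP => H; apply: nJ2; apply/J32E => a b c H1 H2 Hl.
  by apply: NNPP => Hne; apply: H; exists a, b, c; split.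
have st : s < t.
  rewrite lt_neqAle (le_trans H1 H2) andbT; apply/eqP => E; subst t.
  have E : m = s by apply: le_eq_anti.
  by subst m; apply: Hne; apply: fJ1.
have sst := lng_small Hl (ltW st).
have [Cst Ist] := cov s t st sst.
have Pst : ev f s s t = 1.
  have nz : ev f s s t <> 0.
    by case: (sst m H1 H2) => E; subst m => //; rewrite Cst.
  by case: (Hind _ Ist).
have Qst : ev f s t t = 1 by rewrite -Cst.
have st' := ltW st; have nst := neq_lt st.
have corner := uu_corner (Psi (e3 R s t t)) xy sxy.
move/(congr1 Phi): corner; rewrite !Phi_mul K2 PhiZ -/f.
set r := ev (Psi (e3 R s t t)) x y y => corner.
have r1 : r = 1.
  move/(congr1 (fun k => ev k s s t)): corner => /=.
  rewrite ev_mul_sst // sum_cover // evZ Pst mulr1 !ev_mulR ?lexx //.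
  by rewrite nst st' eqxx /= add0r Pst Qst !mulr1 => <-.
have uniq : forall a c, a < c -> small a c -> (a != s) || (c != t) -> ev f a a c = 0.
  move=> a c ac sm ne; have ac' := ltW ac.
  move/(congr1 (fun k => ev k a a c)): corner => /=.
  rewrite ev_mul_sst // sum_cover // evZ r1 mul1r !ev_mulR ?lexx // ?lexx ?ac' /=.
  have evz : s <= a -> a != s -> ev f a s t = 0.
    move=> sa nas; rewrite ev_out //; apply/negP => /andP[a_s _].
    by move/eqP: nas; apply; apply: le_eq_anti.
  case: (eqVneq a s) => [E|nas].
    subst a; move: ne; rewrite eqxx /= => /negbTE ->.
    by rewrite nst /= !mul0r addr0 => <-.
  case: (boolP (s <= a)) => sa; last by rewrite !andbF /= !mul0r addr0 => <-.
  by rewrite evz // !if_same !mul0r addr0 => <-.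
exists s, t; split => //; first exact: lng_1 st sst.
exists (f - (e3 R s s t + e3 R s t t)); split; last by rewrite addrC subrK.
apply/J32E => z1 z2 z3 G1 G2 Hl'.
rewrite evB evD !ev_e3 G1 G2 /=.
case: (eqVneq z1 z3) => [E|n13].
  subst z3; have E2 : z2 = z1 by apply: le_eq_anti.
  subst z2; rewrite fJ1.
  case: (eqVneq z1 s) => [E|_] /=; last by rewrite addr0 subrr.
  by subst z1; rewrite nst /= addr0 subrr.
have lt13 : z1 < z3 by rewrite lt_neqAle n13 (le_trans G1 G2).
have sm13 := lng_small Hl' (ltW lt13).
have [C13 _] := cov z1 z3 lt13 sm13.
case: (boolP ((z1 != s) || (z3 != t))) => ne.
  have U := uniq z1 z3 lt13 sm13 ne.
  have -> : ev f z1 z2 z3 = 0.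
    by case: (sm13 z2 G1 G2) => ->; rewrite -?C13 U.
  move: ne; case: (eqVneq z1 s) => [_|_] /=; last by rewrite addr0 subrr.
  by move/negbTE => ->; rewrite !andbF addr0 subrr.
move: ne; rewrite negb_or !negbK => /andP[/eqP E1 /eqP E3]; subst z1 z3.
rewrite !eqxx /= !andbT.
case: (sm13 z2 G1 G2) => ->; rewrite eqxx ?nst ?(eq_sym t s) ?nst /= ?Pst ?Qst.
  by rewrite addr0 subrr.
by rewrite add0r subrr.
Qed.
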